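(* Let $K\ge1$, $N=2^K-1$ and $\mu>0$. The $(N,K)$ binary simplex coded system with node service rate $\mu$ can serve arrival rates $(\lambda_1,\dots,\lambda_K)\in\mathbb{R}_{\ge0}^K$ if and only if $\lambda_1+\dots+\lambda_K\le 2^{K-1}\mu$. That is, its service capacity region is the simplex $\{(\lambda_1,\dots,\lambda_K)\in\mathbb{R}_{\ge0}^K:\sum_i\lambda_i\le 2^{K-1}\mu\}$.
   Context: Binary simplex coded system: $K$ files $f_1,\dots,f_K$ of equal size (elements of a vector space over a field of characteristic $2$) are stored on $N=2^K-1$ nodes indexed by the nonzero vectors $v\in\mathbb{F}_2^K$, node $v$ storing $\sum_{j=1}^K v_jf_j$. Each node has service rate $\mu$. Let $e_i$ be the $i$-th standard basis vector. The recovering sets of file $f_i$ are the systematic node $\{e_i\}$ and the $2^{K-1}-1$ disjoint repair groups $\{v,v+e_i\}$, $v\in\mathbb{F}_2^K\setminus\{0,e_i\}$ (each unordered pair counted once). Requests for $f_i$ arrive at rate $\lambda_i\ge0$. The system can serve $(\lambda_1,\dots,\lambda_K)$ (i.e., the vector lies in the service capacity region) if there exist nonnegative rates assigned to the recovering sets of each $f_i$, summing to $\lambda_i$ for every $i$, such that for every node the total rate assigned to recovering sets containing that node is at most $\mu$. *)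

(* Defs.v *)
From mathcomp Require Import all_boot all_order all_algebra.
Set Implicit Arguments. Unset Strict Implicit. Unset Printing Implicit Defensive.
Import Order.TTheory GRing.Theory Num.Theory.
Local Open Scope ring_scope.

Definition vecF2 (K : nat) := {ffun 'I_K -> bool}.

Definition vzero (K : nat) : vecF2 K := [ffun _ => false].
Definition vadd (K : nat) (u v : vecF2 K) : vecF2 K := [ffun j => xorb (u j) (v j)].
Definition ebasis (K : nat) (i : 'I_K) : vecF2 K := [ffun j => j == i].

(* The recovering sets of file f_i: the systematic node {e_i} and the repair
   groups {v, v + e_i}, v not in {0, e_i} (unordered pairs, counted once since
   they are sets). *)
Definition recovering_sets (K : nat) (i : 'I_K) : {set {set vecF2 K}} :=
  [set [set ebasis i]] :|:
  [set [set v; vadd v (ebasis i)] | v in [pred v : vecF2 K | (v != vzero K) && (v != ebasis i)]].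

Definition can_serve (R : realFieldType) (K : nat) (mu : R) (lam : 'I_K -> R) : Prop :=
  exists x : 'I_K -> {set vecF2 K} -> R,
    [/\ (forall i S, S \in recovering_sets i -> 0 <= x i S),
        (forall i, \sum_(S in recovering_sets i) x i S = lam i)
      & (forall v : vecF2 K, v != vzero K ->
           \sum_(i < K) \sum_(S in recovering_sets i | v \in S) x i S <= mu)].

(* Main.v *)
Require Import Defs.
From mathcomp Require Import all_boot all_order all_algebra.
Import Order.TTheory GRing.Theory Num.Theory.
Local Open Scope ring_scope.
Set Implicit Arguments. Unset Strict Implicit. Unset Printing Implicit Defensive.
From mathcomp Require Import zify.

Definition par (K : nat) (v : vecF2 K) : bool := \big[addb/false]_(j < K) v j.

Lemma xorbE (a b : bool) : xorb a b = addb a b.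
Proof. by case: a; case: b. Qed.

Lemma par_add_e K (i : 'I_K) (v : vecF2 K) : par (vadd v (ebasis i)) = ~~ par v.
Proof.
rewrite /par.
under eq_bigr => j _ do rewrite /vadd /ebasis !ffunE xorbE.
rewrite big_split /=.
have -> : \big[addb/false]_(j < K) (j == i) = true.
  by rewrite (bigD1 i) //= eqxx big1 // => j /negbTE.
by rewrite addbT.
Qed.

Lemma par0 K : par (vzero K) = false.
Proof. by rewrite /par big1 // => j _; rewrite ffunE. Qed.

Lemma vaddK K (i : 'I_K) (v : vecF2 K) : vadd (vadd v (ebasis i)) (ebasis i) = v.
Proof. by apply/ffunP => j; rewrite !ffunE; case: (v j); case: (j == i). Qed.

Lemma vadd0 K (i : 'I_K) : vadd (vzero K) (ebasis i) = ebasis i.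
Proof. by apply/ffunP => j; rewrite !ffunE. Qed.

Lemma vadd_eq0 K (i : 'I_K) (v : vecF2 K) : (vadd v (ebasis i) == vzero K) = (v == ebasis i).
Proof.
apply/eqP/eqP => [H|->].
  by rewrite -(vaddK i v) H vadd0.
by apply/ffunP => j; rewrite !ffunE; case: (j == i).
Qed.

Lemma vadd_eqe K (i : 'I_K) (v : vecF2 K) : (vadd v (ebasis i) == ebasis i) = (v == vzero K).
Proof.
apply/eqP/eqP => [H|->]; last exact: vadd0.
by rewrite -(vaddK i v) H -{1}(vadd0 i) vaddK.
Qed.

Lemma par_e K (i : 'I_K) : par (ebasis i).
Proof. by rewrite -vadd0 par_add_e par0. Qed.

Definition fr K (i : 'I_K) (u : vecF2 K) : {set vecF2 K} :=
  if u == ebasis i then [set ebasis i] else [set u; vadd u (ebasis i)].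

Definition odds K : {set vecF2 K} := [set u | par u].

Lemma rs_imset K (i : 'I_K) : recovering_sets i = fr i @: odds K.
Proof.
apply/setP => S; rewrite /recovering_sets !inE.
apply/orP/imsetP.
- case=> [/eqP -> | /imsetP [v]].
    by exists (ebasis i); rewrite ?inE ?par_e // /fr eqxx.
  rewrite inE => /andP [Hv0 Hve] ->.
  case Hp: (par v).
    by exists v; rewrite ?inE // /fr (negbTE Hve).
  exists (vadd v (ebasis i)); first by rewrite inE par_add_e Hp.
  by rewrite /fr vadd_eqe (negbTE Hv0) vaddK setUC.
- case=> u; rewrite inE => Hu ->; rewrite /fr.
  case Hue: (u == ebasis i); first by left.
  have {}Hue : u != ebasis i by rewrite Hue.
  right; apply/imsetP; exists u => //.
  rewrite inE Hue andbT; apply/eqP => H; by rewrite H par0 in Hu.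
Qed.

Lemma mem_fr K (i : 'I_K) (u v : vecF2 K) : par u -> v \in fr i u -> u = if par v then v else vadd v (ebasis i).
Proof.
move=> Hu; rewrite /fr; case: eqP => [->|_].
  by rewrite inE => /eqP ->; rewrite par_e.
rewrite !inE => /orP [/eqP ->|/eqP ->]; first by rewrite Hu.
by rewrite par_add_e Hu vaddK.
Qed.

Lemma fr_inj K (i : 'I_K) : {in odds K &, injective (fr i)}.
Proof.
move=> u v; rewrite !inE => Hu Hv H.
have Hvv : v \in fr i v by rewrite /fr; case: eqP => [->|_]; rewrite !inE eqxx.
rewrite -H in Hvv.
by rewrite (mem_fr Hu Hvv) Hv.
Qed.

Lemma card_odds K : (1 <= K)%N -> #|odds K| = (2 ^ K.-1)%N.
Proof.
case: K => [//|k] _.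
pose i0 : 'I_k.+1 := ord0.
have Hc : (#|odds k.+1| + #|~: odds k.+1| = 2 ^ k.+1)%N.
  by rewrite cardsC card_ffun card_bool card_ord.
have Hi : [set vadd u (ebasis i0) | u in odds k.+1] = ~: odds k.+1.
  apply/setP => v; rewrite !inE; apply/imsetP/idP.
    by case=> u; rewrite inE => Hu ->; rewrite par_add_e Hu.
  move=> Hv; exists (vadd v (ebasis i0)); last by rewrite vaddK.
  by rewrite inE par_add_e.
have : #|~: odds k.+1| = #|odds k.+1|.
  rewrite -Hi card_imset // => u v Huv; by rewrite -(vaddK i0 u) Huv vaddK.
move=> H; rewrite H expnS in Hc; rewrite /=.
move: Hc; set t := (2 ^ k)%N; set o := #|odds k.+1|; lia.
Qed.

Lemma sum_w (R : realFieldType) K (i : 'I_K) S : S \in recovering_sets i ->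
  \sum_(v in S) ((par v)%:R : R) = 1.
Proof.
rewrite rs_imset => /imsetP [u]; rewrite inE => Hu ->; rewrite /fr.
case Hue: (u == ebasis i); first by rewrite big_set1 par_e.
rewrite big_setU1 /=; last first.
  rewrite inE; apply/eqP => H.
  by have := congr1 (@par K) H; rewrite par_add_e; case: (par u).
by rewrite big_set1 par_add_e Hu addr0.
Qed.

Lemma in_fr K (i : 'I_K) (v : vecF2 K) : v != vzero K ->
  v \in fr i (if par v then v else vadd v (ebasis i)).
Proof.
move=> Hv; rewrite /fr; case Hp: (par v).
  by case: (v =P ebasis i) => [->|_]; rewrite !inE ?eqxx.
by rewrite vadd_eqe (negbTE Hv) !inE vaddK eqxx orbT.
Qed.

Lemma load1 (R : realFieldType) K (i : 'I_K) (v : vecF2 K) (a : R) : v != vzero K ->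
  \sum_(S in recovering_sets i | v \in S) a = a.
Proof.
move=> Hv.
set o := if par v then v else vadd v (ebasis i).
have Ho : par o by rewrite /o; case: ifP => //; rewrite par_add_e => ->.
rewrite (bigD1 (fr i o)) /=; last first.
  by rewrite in_fr // rs_imset andbT; apply/imsetP; exists o; rewrite ?inE.
rewrite big1 ?addr0 // => S /andP [/andP [HS HvS] HSo].
exfalso; move: HS HSo HvS; rewrite rs_imset => /imsetP [u]; rewrite inE => Hu -> HSo HvS.
by rewrite /o -(mem_fr Hu HvS) eqxx in HSo.
Qed.

Theorem theorem3 (R : realFieldType) (K : nat) (mu : R) (lam : 'I_K -> R) :
  (1 <= K)%N -> 0 < mu -> (forall i, 0 <= lam i) ->
  (can_serve mu lam <-> \sum_(i < K) lam i <= (2 ^ K.-1)%:R * mu).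
Proof.
move=> HK Hmu Hlam.
have Hc : 0 < (2 ^ K.-1)%:R :> R by rewrite ltr0n expn_gt0.
split.
- case=> x [Hx0 Hxs Hxl].
  have E : \sum_(i < K) lam i = \sum_(v : vecF2 K) (par v)%:R *
      \sum_(i < K) \sum_(S in recovering_sets i | v \in S) x i S.
    transitivity (\sum_(i < K) \sum_(S in recovering_sets i)
                     \sum_(v : vecF2 K) if v \in S then x i S * (par v)%:R else 0).
      apply: eq_bigr => i _; rewrite -Hxs; apply: eq_bigr => S HS.
      by rewrite -big_mkcond /= -mulr_sumr (sum_w _ HS) mulr1.
    under eq_bigr => i _ do rewrite exchange_big /=.
    rewrite exchange_big /=; apply: eq_bigr => v _.
    rewrite mulr_sumr; apply: eq_bigr => i _.
    rewrite mulr_sumr big_mkcondr /=; apply: eq_bigr => S _.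
    by case: (v \in S); rewrite // mulrC.
  rewrite E.
  apply: (le_trans (y := \sum_(v : vecF2 K) (par v)%:R * mu)).
    apply: ler_sum => v _.
    case: (v =P vzero K) => [->|/eqP Hv]; first by rewrite par0 !mul0r.
    exact: (ler_wpM2l (ler0n _ _) (Hxl v Hv)).
  rewrite -mulr_suml mulrC.
  suff -> : \sum_(v : vecF2 K) ((par v)%:R : R) = (2 ^ K.-1)%:R by rewrite mulrC.
  rewrite (eq_bigr (fun v => if par v then 1 else 0)); last by move=> v _; case: (par v).
  rewrite -big_mkcond /= sumr_const -(card_odds HK).
  by rewrite /odds cardsE.
- move=> Hs.
  exists (fun i _ => lam i / (2 ^ K.-1)%:R); split.
  + by move=> i S _; rewrite divr_ge0 // ltW.
  + move=> i; rewrite rs_imset big_imset /=; last exact: fr_inj.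
    by rewrite sumr_const card_odds // -[X in X = _]mulr_natr divfK // gt_eqF.
  + move=> v Hv.
    under eq_bigr => i _ do rewrite load1 //.
    by rewrite -mulr_suml ler_pdivrMr // mulrC.
Qed.
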